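(* Let $(\mathcal T,\{B_i\})$ be a tree decomposition of a graph $G$, rooted at $r$, with every node at level at most $d$, and let $\lambda\in\{1,\dots,d\}$. Define new bags $$B'_v := \bigcup\big\{B_w : w\in\mathcal T_{v\leftrightarrow r},\ w\in \mathcal T_{v\leftrightarrow\sigma(v)} \text{ or } w \text{ is a synchronization node}\big\}$$ for $v\neq r$, and $B'_r := B_r$. Then $(\mathcal T,\{B'_v\})$ has combinatorial diameter at most $3$.
   Context: Tree decomposition: tree with bags covering vertices and edges of $G$, each vertex's bags forming a connected subtree. $\mathcal T_{x\leftrightarrow y}$ is the set of nodes on the unique $x$–$y$ path in $\mathcal T$. The level of a node $v$ is the number of edges on $\mathcal T_{v\leftrightarrow r}$. A node is a synchronization node if its level is a multiple of $\lambda$. For $v\neq r$, $\sigma(v)$ is the first synchronization node on the path from $v$ to $r$, excluding $v$. Combinatorial diameter: for nodes $s,t$ consider the path $\mathcal T_{s\leftrightarrow t}$. A non-endpoint node $v$ of the current path, with its two neighbours on the current path labelled $u,w$ (in some order), is redundant if $B_v\cap B_w\subseteq B_u$; bypassing $v$ deletes $v$ and joins $u,w$. The path has combinatorial length at most $\ell$ if repeatedly bypassing redundant nodes (redundancy evaluated in the current path) yields a path with at most $\ell$ edges. The combinatorial diameter is the minimum $\delta$ such that every path $\mathcal T_{u\leftrightarrow v}$ has combinatorial length at most $\delta$ (with respect to the given bags). *)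

(* Defs.v *)
From Stdlib Require Relations.
From mathcomp Require Import all_boot.

Set Implicit Arguments.
Unset Strict Implicit.
Unset Printing Implicit Defensive.

Definition is_tpath (N : finType) (e : rel N) (x y : N) (p : seq N) : bool :=
  [&& path e x p, last x p == y & uniq (x :: p)].

Definition is_tree (N : finType) (e : rel N) : Prop :=
  symmetric e /\ irreflexive e /\ (forall x y : N, exists! p, is_tpath e x y p).

Definition on_tpath (N : finType) (e : rel N) (x y w : N) : Prop :=
  exists p, is_tpath e x y p /\ w \in x :: p.

Definition level (N : finType) (e : rel N) (r v : N) (n : nat) : Prop :=
  exists p, is_tpath e v r p /\ size p = n.

Definition sync (N : finType) (e : rel N) (r : N) (lam : nat) (w : N) : Prop :=
  exists n, level e r w n /\ lam %| n.

(* sigma(v) = s: s is the first synchronization node on T_{v <-> r},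
   v itself excluded. *)
Definition is_sigma (N : finType) (e : rel N) (r : N) (lam : nat) (v s : N)
  : Prop :=
  exists p, [/\ is_tpath e v r p, s \in p, sync e r lam s &
    forall w, w \in take (index s p) p -> ~ sync e r lam w].

Definition tree_decomposition (V N : finType) (g : rel V) (e : rel N)
  (B : N -> {set V}) : Prop :=
  [/\ is_tree e,
      (forall x : V, exists t, x \in B t),
      (forall x y : V, g x y -> exists t, (x \in B t) && (y \in B t)) &
      (forall (x : V) (a b : N), x \in B a -> x \in B b ->
         exists p, [&& path e a p, last a p == b & all (fun w => x \in B w) p])].

Definition new_bag (V N : finType) (e : rel N) (r : N) (lam : nat)
  (B : N -> {set V}) (v : N) (x : V) : Prop :=
  if v == r then (x \in B r : Prop)
  else exists w, [/\ on_tpath e v r w, x \in B w &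
         (exists s, is_sigma e r lam v s /\ on_tpath e v s w)
         \/ sync e r lam w].

Definition bag_sub (V : Type) (P Q : V -> Prop) : Prop := forall x, P x -> Q x.

Definition bypass (V N : Type) (Bg : N -> V -> Prop) (s t : seq N) : Prop :=
  exists (a b : seq N) (u v w : N),
    [/\ s = a ++ [:: u; v; w] ++ b, t = a ++ [:: u; w] ++ b &
        bag_sub (fun x => Bg v x /\ Bg w x) (Bg u) \/
        bag_sub (fun x => Bg v x /\ Bg u x) (Bg w)].

Definition comb_length_le (V N : Type) (Bg : N -> V -> Prop) (s : seq N)
  (l : nat) : Prop :=
  exists t, Relation_Operators.clos_refl_trans (seq N) (bypass Bg) s t /\ (size t).-1 <= l.

Definition comb_diameter_le (V N : finType) (e : rel N) (Bg : N -> V -> Prop)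
  (delta : nat) : Prop :=
  forall (u v : N) (p : seq N), is_tpath e u v p ->
    comb_length_le Bg (u :: p) delta.

(* Main.v *)
Require Import Defs.
From mathcomp Require Import all_boot zify.
From Stdlib Require Relations.

Set Implicit Arguments.
Unset Strict Implicit.
Unset Printing Implicit Defensive.

Section Tree.
Variables (N : finType) (e : rel N) (r : N).
Hypothesis etree : is_tree e.

Lemma esymm : symmetric e. Proof. by case: etree. Qed.

Lemma tpath_uniq x y p q : is_tpath e x y p -> is_tpath e x y q -> p = q.
Proof.
case: etree => _ [_ H] hp hq; case: (H x y) => p0 [_ U].
by rewrite -(U _ hp) -(U _ hq).
Qed.

Lemma ex_rp v : exists p, is_tpath e v r p.
Proof. case: etree => _ [_ H]; by case: (H v r) => p [hp _]; exists p. Qed.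

Definition rp v := xchoose (ex_rp v).
Lemma rpP v : is_tpath e v r (rp v). Proof. exact: xchooseP. Qed.
Definition par v := head r (rp v).
Definition lev v := size (rp v).

Lemma rp_r : rp r = [::].
Proof. apply: tpath_uniq (rpP r) _; by rewrite /is_tpath /= eqxx. Qed.

Lemma rp_cons v : v != r -> rp v = par v :: rp (par v).
Proof.
move=> vr; have := rpP v; rewrite /par.
case: (rp v) => [|y q].
  by case/and3P => _ /eqP /= vr' _; rewrite vr' eqxx in vr.
case/and3P => /andP[evy pq] lq /andP[_ uq].
congr (_ :: _); apply: tpath_uniq (rpP y); by apply/and3P.
Qed.

Lemma par_r : par r = r. Proof. by rewrite /par rp_r. Qed.
Lemma lev_r : lev r = 0. Proof. by rewrite /lev rp_r. Qed.
Lemma lev_par v : lev (par v) = (lev v).-1.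
Proof.
case: (eqVneq v r) => [->|vr]; first by rewrite par_r lev_r.
by rewrite {2}/lev (rp_cons vr).
Qed.
Lemma lev0 v : lev v = 0 -> v = r.
Proof.
case: (eqVneq v r) => // vr; by rewrite /lev (rp_cons vr).
Qed.
Lemma e_par v : v != r -> e v (par v).
Proof.
move=> vr; have := rpP v; rewrite (rp_cons vr); by case/and3P => /andP[].
Qed.
Lemma levpos v : 0 < lev v -> v != r.
Proof. by apply: contraTneq => ->; rewrite lev_r. Qed.

Definition an v k := iter k par v.
Lemma an0 v : an v 0 = v. Proof. by []. Qed.
Lemma an_par v k : an (par v) k = an v k.+1. Proof. by rewrite /an iterSr. Qed.
Lemma anD v a b : an (an v a) b = an v (b + a). Proof. by rewrite /an iterD. Qed.
Lemma lev_an v k : lev (an v k) = lev v - k.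
Proof. elim: k => [|k IH]; first by rewrite subn0. by rewrite /= lev_par IH; lia. Qed.
Lemma an_top v : an v (lev v) = r.
Proof. apply: lev0; rewrite lev_an; lia. Qed.

Fixpoint upl v n := if n is n'.+1 then par v :: upl (par v) n' else [::].
Lemma upl_S v n : upl v n.+1 = par v :: upl (par v) n. Proof. by []. Qed.
Lemma upl_0 v : upl v 0 = [::]. Proof. by []. Qed.
Arguments upl : simpl never.

Lemma size_upl v n : size (upl v n) = n.
Proof. by elim: n v => // n IH v; rewrite upl_S /= IH. Qed.
Lemma last_upl v n : last v (upl v n) = an v n.
Proof. by elim: n v => // n IH v; rewrite upl_S /= IH an_par. Qed.
Lemma upl_rcons v n : upl v n.+1 = rcons (upl v n) (an v n.+1).
Proof.
elim: n v => [|n IH] v //.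
by rewrite upl_S IH upl_S rcons_cons an_par.
Qed.
Lemma nth_upl v n i x0 : i < n -> nth x0 (upl v n) i = an v i.+1.
Proof.
elim: n v i => [|n IH] v [|i] // lt; rewrite upl_S //=.
by rewrite IH // an_par.
Qed.
Lemma mem_upl v n y : y \in v :: upl v n -> exists2 k, k <= n & y = an v k.
Proof.
elim: n v => [|n IH] v; first by rewrite upl_0 inE => /eqP ->; exists 0.
rewrite upl_S inE => /orP[/eqP ->|]; first by exists 0.
case/IH => k kn ->; exists k.+1 => //; by rewrite an_par.
Qed.
Lemma upl_mem v n k : k <= n -> an v k \in v :: upl v n.
Proof.
elim: n v k => [|n IH] v [|k] kn; try by rewrite inE eqxx.
by [].
by rewrite in_cons upl_S -an_par (IH (par v) k) ?orbT.
Qed.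
Lemma path_upl v n : n <= lev v -> path e v (upl v n).
Proof.
elim: n v => [|n IH] v // nl; rewrite upl_S /=.
have vr : v != r by apply: levpos; lia.
rewrite e_par //= IH // lev_par; lia.
Qed.

Lemma uniq_upl v n : n <= lev v -> uniq (v :: upl v n).
Proof.
elim: n v => [|n IH] v // nl; rewrite upl_S.
have pl : n <= lev (par v) by rewrite lev_par; lia.
rewrite cons_uniq IH // andbT.
apply/negP => /(@mem_upl (par v) n v) [k kn vk].
have := congr1 lev vk; rewrite an_par lev_an; lia.
Qed.

Lemma upl_tpath v n : n <= lev v -> is_tpath e v (an v n) (upl v n).
Proof. by move=> nl; rewrite /is_tpath path_upl // last_upl eqxx uniq_upl. Qed.

Lemma tpath_upl v n p : n <= lev v -> is_tpath e v (an v n) p -> p = upl v n.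
Proof. move=> nl hp; exact: tpath_uniq hp (upl_tpath nl). Qed.

Lemma levelE w n : level e r w n <-> n = lev w.
Proof.
split.
  case=> p [hp <-]; rewrite -(an_top w) in hp.
  by rewrite (tpath_upl _ hp) // size_upl.
move=> ->; exists (upl w (lev w)); rewrite size_upl; split => //.
by have := @upl_tpath w _ (leqnn (lev w)); rewrite an_top.
Qed.

Lemma on_tpathE v n w : n <= lev v ->
  (on_tpath e v (an v n) w <-> exists2 k, k <= n & w = an v k).
Proof.
move=> nl; split.
  by case=> p [hp]; rewrite (tpath_upl nl hp) => /mem_upl.
case=> k kn ->; exists (upl v n); split; [exact: upl_tpath | exact: upl_mem].
Qed.

Lemma an_inj v i j : i <= lev v -> j <= lev v -> an v i = an v j -> i = j.
Proof. move=> il jl /(congr1 lev); rewrite !lev_an; lia. Qed.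


Lemma nth_upl0 v n k x0 : k <= n -> nth x0 (v :: upl v n) k = an v k.
Proof. by case: k => [|k] //= kn; rewrite nth_upl. Qed.

Lemma tpath_decomp s t p : is_tpath e s t p -> exists i j,
  [/\ i <= lev s, j <= lev t, an s i = an t j &
      p = upl s i ++ rev (belast t (upl t j))].
Proof.
move=> hp.
pose S := s :: upl s (lev s); pose T := t :: upl t (lev t).
pose a := fun x => x \in T.
have hasS : has a S.
  apply/hasP; exists r.
    by have := @upl_mem s _ _ (leqnn (lev s)); rewrite an_top.
  by rewrite /a; have := @upl_mem t _ _ (leqnn (lev t)); rewrite an_top.
set i := find a S.
have iS : i <= lev s by move: hasS; rewrite has_find /= size_upl.
have cT := nth_find s hasS.
rewrite /a nth_upl0 // in cT; case: (mem_upl cT) => j jt cj.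
have ci : an s i = an t j := cj.
exists i, j; split => //.
apply: tpath_uniq hp _.
rewrite /is_tpath cat_path path_upl // last_upl cj.
rewrite -(last_upl t j) rev_path.
have -> : path (fun z => e^~ z) t (upl t j) = path e t (upl t j).
  by apply: eq_path => x y; rewrite esymm.
rewrite path_upl // last_cat last_upl.
have lastok : last (an t j) (rev (belast t (upl t j))) == t.
  case: (j) => [|j']; first by rewrite upl_0.
  by rewrite upl_S /= rev_cons last_rcons.
rewrite cj lastok.
have := uniq_upl jt; rewrite lastI rcons_uniq last_upl => /andP[cnb ub].
rewrite -cat_cons cat_uniq uniq_upl // rev_uniq ub andbT /= andbT.
apply/hasPn => y; rewrite mem_rev => yb.
have yT : y \in t :: upl t j := mem_belast yb.
case: (mem_upl yT) => k kj yk.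
apply/negP => /mem_upl [k' k'i yk'].
case: (ltngtP k' i) => [lt|gt|eq].
- have := before_find s lt; rewrite nth_upl0; last lia.
  by rewrite /a -yk' yk upl_mem //; lia.
- lia.
- by move: cnb; rewrite -ci -eq -yk' yb.
Qed.


Definition A v l := an v (lev v - l).
Lemma lev_A v l : l <= lev v -> lev (A v l) = l.
Proof. move=> ll; rewrite /A lev_an; lia. Qed.
Lemma A_A b lv l : lv <= lev b -> l <= lv -> A (A b lv) l = A b l.
Proof.
move=> lvb llv; rewrite {1}/A lev_A // /A anD; congr an; lia.
Qed.
Lemma an_A v k : k <= lev v -> an v k = A v (lev v - k).
Proof. move=> kl; rewrite /A; congr an; lia. Qed.

Variables (V : finType) (g : rel V) (B : N -> {set V}) (lam : nat).
Hypothesis td : tree_decomposition g e B.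
Hypothesis lp : 0 < lam.

Definition M n := (n.-1 %/ lam) * lam.
Lemma F1 n : M n <= n.-1. Proof. exact: leq_divM. Qed.
Lemma F3 n : lam %| M n. Proof. exact: dvdn_mull. Qed.
Lemma F2 l n : lam %| l -> l <= n.-1 -> l <= M n.
Proof. move=> hl ln; rewrite -(divnK hl) /M leq_mul2r leq_div2r ?orbT //. Qed.
Lemma F6 a b : lam %| a -> lam %| b -> a < b + lam -> b < a + lam -> a = b.
Proof.
case/dvdnP => qa -> /dvdnP [qb ->].
move=> h1 h2.
have e1 : qa < qb.+1 by rewrite -(ltn_pmul2r lp) mulSn; lia.
have e2 : qb < qa.+1 by rewrite -(ltn_pmul2r lp) mulSn; lia.
have -> : qa = qb by lia.
by [].
Qed.

Lemma RI b k j x : k <= lev b -> j <= k -> x \in B b -> x \in B (an b k) ->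
  x \in B (an b j).
Proof.
move=> kl jk xb xk.
case: td => _ _ _ /(_ x b (an b k) xb xk) [p /and3P[pp /eqP lp' ap]].
move: lp'; case: (shortenP pp) => p' pp' up' sub' lp'.
have hp : is_tpath e b (an b k) p' by rewrite /is_tpath pp' lp' eqxx up'.
have ep := tpath_upl kl hp.
case: j jk => [|j] jk; first by [].
have : an b j.+1 \in p'.
  by rewrite ep -(nth_upl b b jk) mem_nth // size_upl.
by move/sub' => /(allP ap).
Qed.

Lemma RIl b l1 l l2 x : l1 <= l <= l2 -> l2 <= lev b ->
  x \in B (A b l1) -> x \in B (A b l2) -> x \in B (A b l).
Proof.
move=> /andP[h1 h2] h3 x1 x2.
have la : lev (A b l2) = l2 by rewrite lev_A.
have E1 : A b l1 = an (A b l2) (l2 - l1).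
  by rewrite -(A_A h3 (leq_trans h1 h2)) /A la.
have E : A b l = an (A b l2) (l2 - l).
  by rewrite -(A_A h3 h2) /A la.
rewrite E; apply: (@RI _ (l2 - l1)); rewrite ?la -?E1 //; lia.
Qed.

Definition Bp v x := exists l,
  [/\ l <= lev v, x \in B (A v l) & (lam %| l) || (M (lev v) <= l)].

Lemma BpA b lv x : lv <= lev b -> (Bp (A b lv) x <->
  exists l, [/\ l <= lv, x \in B (A b l) & (lam %| l) || (M lv <= l)]).
Proof.
move=> lvb; rewrite /Bp lev_A //; split; case=> l [h1 h2 h3]; exists l;
  split => //; by [rewrite -(A_A lvb h1) | rewrite (A_A lvb h1)].
Qed.


Lemma R1 b l x : l.+1 <= lev b -> ~~ (lam %| l) -> Bp (A b l) x -> Bp (A b l.+1) x.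
Proof.
move=> lb nd; rewrite (@BpA _ _ x (ltnW lb)) (@BpA _ _ x lb).
case=> l' [h1 h2 h3]; exists l'; split => //; first lia.
case/orP: h3 => [->//|h3]; apply/orP; right.
suff -> : M l.+1 = M l by [].
case: l nd h1 h3 lb => [|l0]; first by rewrite dvdn0.
by move=> nd *; rewrite /M /= (divnS _ lp) (negbTE nd).
Qed.

Lemma R2 b lu lv L x : lu <= lev b -> L < lv -> lv < lu -> lam %| lv -> lam %| L ->
  Bp (A b lv) x -> Bp (A b L) x -> Bp (A b lu) x.
Proof.
move=> lub Llv lvlu dv dL.
have h1 : lv <= lev b by lia.
have h2 : L <= lev b by lia.
rewrite (@BpA _ _ x h1) (@BpA _ _ x h2) (@BpA _ _ x lub).
case=> l1 [a1 b1 c1] [l2 [a2 b2 c2]].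
case/orP: c1 => [d1|m1].
  by exists l1; split; [lia | done | rewrite d1].
have LM : L <= M lv by apply: F2 => //; lia.
exists (M lv); split.
- have := F1 lv; lia.
- apply: (@RIl b l2 _ l1) => //; [apply/andP; split; lia | lia].
- by rewrite F3.
Qed.

Lemma R3 bs bt lc L x : L <= lev bs -> L <= lev bt -> A bs lc = A bt lc ->
  lc < L -> L <= lc + lam -> lam %| L ->
  Bp (A bt lc) x -> Bp (A bt L) x -> Bp (A bs L) x.
Proof.
move=> Ls Lt Ec lcL Lle dL.
have As : forall l, l <= lc -> A bs l = A bt l.
  move=> l ll; rewrite -(@A_A bs lc l) ?Ec ?A_A //; lia.
have lct : lc <= lev bt by lia.
rewrite (@BpA _ _ x lct) (@BpA _ _ x Lt) (@BpA _ _ x Ls).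
case=> l1 [a1 b1 c1] [l2 [a2 b2 c2]].
have Llam : lam <= L by apply: dvdn_leq => //; lia.
have dLl : lam %| L - lam by rewrite dvdn_sub.
have ML : M L = L - lam.
  apply: F6 => //; first exact: F3.
    have := F1 L; lia.
  have := @F2 (L - lam) L dLl; lia.
case: (boolP (lam %| l1)) => d1.
  by exists l1; split; [lia | rewrite As | rewrite d1].
case: (leqP (L - lam) l1) => m1.
  by exists l1; split; [lia | rewrite As | rewrite ML m1 orbT].
have Mc : M lc <= l1 by move: c1; rewrite (negbTE d1).
have lcE : lc = L - lam.
  case: (ltngtP (L - lam) lc) => // h; last lia.
  have := @F2 (L - lam) lc dLl; lia.
case: (leqP lc l2) => m2.
  exists lc; split; [lia | | by rewrite ML lcE leqnn orbT].
  rewrite As //; apply: (@RIl bt l1 _ l2) => //; [apply/andP; split; lia | lia].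
exists l2; split; [lia | rewrite As //; lia | ].
by move: c2; rewrite ML -lcE leqNgt m2 orbF => ->.
Qed.


Lemma syncE w : sync e r lam w <-> lam %| lev w.
Proof.
split; first by case=> n [/levelE -> h].
by move=> h; exists (lev w); split => //; apply/levelE.
Qed.

Lemma lev_pos v : v != r -> 0 < lev v.
Proof. move=> vr; case: (posnP (lev v)) => // /lev0 E; by rewrite E eqxx in vr. Qed.

Lemma sigmaE v s : v != r -> is_sigma e r lam v s -> s = an v (lev v - M (lev v)).
Proof.
move=> vr [p [hp sp /syncE ss smin]].
have lv1 := lev_pos vr.
have F1' := F1 (lev v).
rewrite -(an_top v) in hp; have ep := tpath_upl (leqnn _) hp; subst p.
set U := upl v (lev v) in sp smin *.
set i := index s U in smin.
have iU : i < lev v by rewrite -(size_upl v (lev v)) index_mem.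
have sE : s = an v i.+1 by rewrite -(nth_upl v r iU) nth_index.
have lsE : lev s = lev v - i.+1 by rewrite sE lev_an.
rewrite lsE in ss.
have Mmin : forall i', i' < i -> ~~ (lam %| lev v - i'.+1).
  move=> i' ii; apply/negP => d; apply: (smin (an v i'.+1)); last first.
    by apply/syncE; rewrite lev_an.
  rewrite -(nth_upl v r (ltn_trans ii iU)) -(nth_take r ii); apply: mem_nth.
  by rewrite size_take size_upl iU.
have le1 : lev v - i.+1 <= M (lev v) by apply: F2 => //; lia.
have le2 : M (lev v) <= lev v - i.+1.
  rewrite leqNgt; apply/negP => lt.
  have ii : (lev v - M (lev v)).-1 < i by lia.
  have h := Mmin _ ii.
  move: h; rewrite (_ : lev v - (lev v - M (lev v)).-1.+1 = M (lev v)) ?F3 //; lia.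
rewrite sE; congr an; lia.
Qed.

Lemma sigma_ex v : v != r -> is_sigma e r lam v (an v (lev v - M (lev v))).
Proof.
move=> vr; have lv1 := lev_pos vr; have F1' := F1 (lev v).
set k := lev v - M (lev v).
have uU : uniq (upl v (lev v)) by have := uniq_upl (leqnn (lev v)); case/andP.
have ek : an v k = nth r (upl v (lev v)) k.-1 by rewrite nth_upl ?prednK //; lia.
exists (upl v (lev v)); split.
- by have := @upl_tpath v _ (leqnn (lev v)); rewrite an_top.
- by rewrite ek mem_nth // size_upl; lia.
- by apply/syncE; rewrite lev_an (_ : lev v - k = M (lev v)) ?F3 //; lia.
- move=> w; rewrite ek index_uniq ?size_upl //; last lia.
  move=> wt /syncE dw.
  set i := index w (take k.-1 (upl v (lev v))).
  have ii : i < k.-1.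
    have : i < size (take k.-1 (upl v (lev v))) by rewrite index_mem.
    have kk : k.-1 < lev v by lia.
    by rewrite size_take size_upl kk.
  have wE : w = an v i.+1.
    have il : i < lev v by lia.
    by rewrite -(nth_upl v r il) -(nth_take r ii) nth_index.
  rewrite wE lev_an in dw.
  have hh : lev v - i.+1 <= (lev v).-1 by lia.
  have := @F2 _ (lev v) dw hh; lia.
Qed.

Lemma new_bagE v x : new_bag e r lam B v x <-> Bp v x.
Proof.
rewrite /new_bag /Bp; case: eqVneq => [->|vr].
  rewrite lev_r; split.
    by move=> xr; exists 0; split => //; rewrite ?dvdn0 // /A lev_r.
  case=> l [l0 xb _]; have E : l = 0 by lia.
  by move: xb; rewrite E /A lev_r.
have lv1 := lev_pos vr; have F1' := F1 (lev v).
have ontr : forall w, on_tpath e v r w <-> exists2 k, k <= lev v & w = an v k.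
  by move=> w; have := @on_tpathE v (lev v) w (leqnn _); rewrite an_top.
split.
- case=> w [/ontr [k kl ->] xb H].
  exists (lev v - k); split; [lia | by rewrite /A (_ : lev v - (lev v - k) = k) //; lia | ].
  case: H => [[s [/(sigmaE vr) -> ]] | /syncE].
    case/on_tpathE; first lia.
    move=> k' k'l /an_inj E; rewrite E; [apply/orP; right; lia | lia | lia].
  by rewrite lev_an => ->.
- case=> l [ll xb H]; exists (A v l); split => //.
  + by apply/ontr; exists (lev v - l) => //; lia.
  + case/orP: H => [d|m]; first by right; apply/syncE; rewrite lev_A.
    left; exists (an v (lev v - M (lev v))); split; first exact: sigma_ex.
    by apply/on_tpathE; [lia | exists (lev v - l); [lia | done]].
Qed.


Definition Bg := new_bag e r lam B.
Notation rt := (Relation_Operators.clos_refl_trans (seq N) (bypass Bg)).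

Lemma bypass_rev a b : bypass Bg a b -> bypass Bg (rev a) (rev b).
Proof.
case=> [a' [b' [u [v [w [-> -> H]]]]]].
exists (rev b'), (rev a'), w, v, u; split.
- by rewrite !rev_cat -catA.
- by rewrite !rev_cat -catA.
- by case: H; [right | left].
Qed.

Lemma rt_rev a b : rt a b -> rt (rev a) (rev b).
Proof.
elim=> [x y /bypass_rev H|x|x y z _ H1 _ H2].
- exact: Relation_Operators.rt_step.
- exact: Relation_Operators.rt_refl.
- exact: Relation_Operators.rt_trans H1 H2.
Qed.

Lemma sweep (keep : pred N) n : forall b pre suf,
  (forall k, 0 < k <= n -> ~~ keep (an b k) ->
    bag_sub (fun x => Bg (an b k) x /\
                      Bg (head (an b n.+1) (filter keep (upl (an b k) (n - k)))) x)
            (Bg (an b k.-1))) ->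
  rt (pre ++ b :: upl b n ++ an b n.+1 :: suf)
     (pre ++ b :: filter keep (upl b n) ++ an b n.+1 :: suf).
Proof.
elim: n => [|n IH] b pre suf H; first by rewrite upl_0; apply: Relation_Operators.rt_refl.
have IH' := IH (par b) (rcons pre b) suf.
rewrite !cat_rcons !an_par in IH'.
rewrite upl_S.
apply: Relation_Operators.rt_trans (IH' _) _.
  move=> k /andP[k0 kn] nk.
  rewrite an_par in nk; rewrite !an_par prednK //.
  have := H k.+1; rewrite subSS; apply => //; lia.
rewrite /=; case: (boolP (keep (par b))) => kp.
  exact: Relation_Operators.rt_refl.
apply: Relation_Operators.rt_step.
exists pre, (behead (filter keep (upl (par b) n) ++ an b n.+2 :: suf)), b, (par b),
  (head (an b n.+2) (filter keep (upl (par b) n))); split.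
- by case: (filter keep _).
- by case: (filter keep _).
- left; have := H 1 (isT : 0 < 1 <= n.+1) kp.
  by rewrite subn1.
Qed.


Lemma filter_upl v m L : m <= lev v ->
  filter (fun y => lev y == L) (upl v m) =
  if (lev v - m <= L) && (L < lev v) then [:: A v L] else [::].
Proof.
elim: m v => [|m IH] v ml.
  rewrite upl_0 /=; case: ifP => // /andP[h1 h2]; lia.
have pl : m <= lev (par v) by rewrite lev_par; lia.
rewrite upl_S /= IH // lev_par.
case: (eqVneq (lev v).-1 L) => [E|NE].
  have -> : ((lev v).-1 - m <= L) && (L < (lev v).-1) = false.
    by apply/negbTE/negP => /andP[h1 h2]; lia.
  have -> : (lev v - m.+1 <= L) && (L < lev v) = true.
    by apply/andP; split; lia.
  by rewrite /A (_ : lev v - L = 1) //; lia.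
have -> : (lev v - m.+1 <= L) && (L < lev v) = ((lev v).-1 - m <= L) && (L < (lev v).-1).
  by apply/idP/idP => /andP[h1 h2]; apply/andP; split; lia.
case: ifP => // /andP[h1 h2].
rewrite /A lev_par an_par; congr (_ :: _); congr an; lia.
Qed.

Definition Lof c := (lev c %/ lam).+1 * lam.
Lemma Lof_dvd c : lam %| Lof c. Proof. exact: dvdn_mull. Qed.
Lemma Lof_gt c : lev c < Lof c. Proof. exact: ltn_ceil. Qed.
Lemma Lof_le c : Lof c <= lev c + lam.
Proof. rewrite /Lof mulSn addnC leq_add2r; exact: leq_divM. Qed.
Lemma Lof_min c y : lam %| y -> lev c < y -> Lof c <= y.
Proof.
move=> /dvdnP [q ->] lt; by rewrite /Lof leq_mul2r ltn_divLR // lt orbT.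
Qed.


Lemma sweep_ok b n pre suf : n.+1 <= lev b ->
  rt (pre ++ b :: upl b n ++ an b n.+1 :: suf)
     (pre ++ b :: (if Lof (an b n.+1) < lev b then [:: A b (Lof (an b n.+1))] else [::])
          ++ an b n.+1 :: suf).
Proof.
move=> nb; set c := an b n.+1; set L := Lof c.
have lc : lev c = lev b - n.+1 by rewrite lev_an.
have Lg := Lof_gt c; have Ld := Lof_dvd c; rewrite -/L in Lg Ld.
have -> : (if L < lev b then [:: A b L] else [::]) =
          filter (fun y => lev y == L) (upl b n).
  rewrite filter_upl; last lia.
  by rewrite (_ : (lev b - n <= L) = true) //; apply/idP; lia.
apply: sweep => k /andP[k0 kn] nk x [H1 H2].
apply/new_bagE; move/new_bagE: H1 => H1; move/new_bagE: H2 => H2.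
have ak : an b k = A b (lev b - k) by rewrite an_A //; lia.
have ak1 : an b k.-1 = A b (lev b - k).+1 by rewrite an_A; [congr A; lia | lia].
rewrite ak1; rewrite ak in H1 H2 nk.
case: (boolP (lam %| lev b - k)) => dk; last first.
  by apply: R1 => //; lia.
have LL : L <= lev b - k by apply: Lof_min => //; lia.
rewrite lev_A in nk; last lia.
have lkL : L < lev b - k by move: nk; rewrite neq_ltn; case/orP => h; lia.
have hd : head c (filter (fun y => lev y == L) (upl (A b (lev b - k)) (n - k))) = A b L.
  have la : lev (A b (lev b - k)) = lev b - k by rewrite lev_A //; lia.
  have nl : n - k <= lev (A b (lev b - k)) by rewrite la; lia.
  rewrite (filter_upl _ nl) la.
  rewrite (_ : (lev b - k - (n - k) <= L) && (L < lev b - k) = true); last first.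
    by apply/andP; split; lia.
  by rewrite /= A_A //; lia.
rewrite hd in H2.
by apply: (R2 _ _ _ _ _ H1 H2) => //; lia.
Qed.

Lemma rev_mid (x y : N) l1 l2 : rev (x :: l1 ++ y :: l2) = rev l2 ++ y :: rev (x :: l1).
Proof. by rewrite -cat_cons rev_cat rev_cons cat_rcons. Qed.

Lemma rev_last (x y : N) l : rev (x :: l ++ [:: y]) = y :: rev (x :: l).
Proof. by rewrite -cat_cons cats1 rev_rcons. Qed.

Theorem main_sec : comb_diameter_le e Bg 3.
Proof.
move=> s t p hp.
case: (tpath_decomp hp) => i [j [il jl cij ->]].
rewrite /comb_length_le.
case: i il cij => [|i] il cij; case: j jl cij => [|j] jl cij.
- exists [:: s]; split => //; rewrite !upl_0 /=; exact: Relation_Operators.rt_refl.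
- have sE : s = an t j.+1 := cij.
  have H := rt_rev (@sweep_ok t j [::] [::] jl).
  rewrite !cat0s !rev_last -sE in H.
  rewrite upl_0 upl_rcons belast_rcons cat0s.
  eexists; split; first exact: H.
  by rewrite /= size_rev /=; case: ifP.
- rewrite upl_0 (_ : rev (belast t [::]) = [::]) // cats0 upl_rcons -cats1.
  have H := @sweep_ok s i [::] [::] il.
  rewrite !cat0s in H.
  exists (s :: (if Lof (an s i.+1) < lev s then [:: A s (Lof (an s i.+1))] else [::])
            ++ [:: an s i.+1]); split.
    exact: H.
  by rewrite /= size_cat; case: ifP.
- set c := an s i.+1.
  rewrite upl_rcons upl_rcons belast_rcons -cats1 -catA cat1s.
  set L := Lof c.
  set K1 := (if L < lev s then [:: A s L] else [::]).
  have H1 := @sweep_ok s i [::] (rev (t :: upl t j)) il.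
  rewrite !cat0s -/c -/L -/K1 in H1.
  have H2 := @sweep_ok t j [::] (rev (s :: K1)) jl.
  rewrite !cat0s -cij -/c -/L in H2.
  set K2 := (if L < lev t then [:: A t L] else [::]) in H2.
  have H2' := rt_rev H2.
  rewrite !rev_mid revK in H2'.
  have H12 := @Relation_Operators.rt_trans _ _ _ _ _ H1 H2'.
  move: H12; rewrite /K1 /K2; case: ifP => hs; case: ifP => ht => H12;
    try by (eexists; split; [exact: H12 | rewrite /= ?size_cat ?size_rev]).
  eexists; split.
    apply: (@Relation_Operators.rt_trans _ _ _ _ _ H12); apply: Relation_Operators.rt_step.
    exists [:: s], [:: t], (A s L), c, (A t L); split; [by [] | reflexivity | left].
    move=> x [Hc Hz']; apply/new_bagE; move/new_bagE: Hc; move/new_bagE: Hz' => Hz' Hc.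
    have lc : lev c = lev t - j.+1 by rewrite /c cij lev_an.
    have lcs : lev c = lev s - i.+1 by rewrite /c lev_an.
    have ct : c = A t (lev c) by rewrite lc /c cij an_A.
    have cs : c = A s (lev c) by rewrite lcs /c an_A.
    rewrite ct in Hc.
    have := Lof_gt c; have := Lof_le c; have := Lof_dvd c; rewrite -/L => d1 d2 d3.
    apply: (@R3 s t (lev c) L x) => //; try lia.
    by rewrite -cs -ct.
  by [].
Qed.

End Tree.

Theorem lemma4p3 (V N : finType) (g : rel V) (e : rel N) (B : N -> {set V})
  (r : N) (d lam : nat) :
  tree_decomposition g e B ->
  (forall (v : N) (n : nat), level e r v n -> n <= d) ->
  1 <= lam <= d ->
  comb_diameter_le e (new_bag e r lam B) 3.
Proof.
move=> td _ /andP[l1 _].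
have et : is_tree e by case: td.
exact: (@main_sec N e r et V g B lam td l1).
Qed.
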